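(* Let $k\ge 1$ and $n$ be integers, and let $H$ be the $k\times k$ complex matrix whose $i$-th row ($1\le i\le k$) is $v((n+k+i-1)_{k+1})-v((n+k+i-1)_{k})$. Then the nullity of $H$ equals the number of cycles (loops included) in the directed graph $G(n,k)$.
   Context: For an integer $\ell$, $\ell_k$ and $\ell_{k+1}$ denote the least nonnegative residues of $\ell$ modulo $k$ and $k+1$. Let $\xi$ be a complex primitive $(k+1)$-th root of unity and $v(\ell)=(\xi^{\ell},\xi^{2\ell},\dots,\xi^{k\ell})\in\mathbb{C}^k$. $G(n,k)$ is the directed graph on vertices $0,1,\dots,k$ whose edges are exactly the $k$ edges $E(i): (i+n-2)_{k+1}\to(i+n-1)_k$, $1\le i\le k$; equivalently $a\to b$ is an edge iff $v(a)-v(b)$ is a row of $H$. An edge $a\to a$ is a loop and counts as a cycle of length $1$. In the paper the nullity of $H$ equals $N(n,k)$, where for $n>k$, $N(n,k)$ is the nullity of the $n\times n$ skew-symmetric Toeplitz matrix $A(n,k)$ whose first $k$ superdiagonals have all entries $1$ and remaining superdiagonals all entries $0$. *)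

(* Defs.v *)
From mathcomp Require Import all_boot all_order all_algebra all_field.
Set Implicit Arguments. Unset Strict Implicit. Unset Printing Implicit Defensive.
Import GRing.Theory Num.Theory.
Local Open Scope ring_scope.

Definition resid (l : int) (m : nat) : nat := `|(l %% (m%:Z))%Z|%N.

(* v(l) = (xi^l, xi^(2l), ..., xi^(kl)); component j : 'I_k is xi^((j+1) l) *)
Definition vvec (k : nat) (xi : algC) (l : nat) (j : 'I_k) : algC :=
  xi ^+ (j.+1 * l)%N.

(* H : row i (1 <= i <= k, here i = i'+1 with i' : 'I_k) is
   v((n+k+i-1)_{k+1}) - v((n+k+i-1)_k) *)
Definition Hmx (n : int) (k : nat) (xi : algC) : 'M[algC]_k :=
  \matrix_(i < k, j < k)
     (vvec xi (resid (n + k%:Z + i%:Z) k.+1) j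
      - vvec xi (resid (n + k%:Z + i%:Z) k) j).

Definition nullity (k : nat) (A : 'M[algC]_k) : nat := (k - \rank A)%N.

(* Graph G(n,k): vertices 0..k (nat), edges E(i), i = i'+1 with i' : 'I_k,
   E(i) : (i+n-2)_{k+1} -> (i+n-1)_k *)
Definition etail (n : int) (k : nat) (i : 'I_k) : nat :=
  resid (i.+1%:Z + n - 2) k.+1.
Definition ehead (n : int) (k : nat) (i : 'I_k) : nat :=
  resid (i.+1%:Z + n - 1) k.

Definition cycle_seq (n : int) (k : nat) (s : seq 'I_k) : bool :=
  [&& s != [::], uniq s, uniq (map (@etail n k) s)
    & cycle (fun e f => @ehead n k e == @etail n k f) s].

(* A directed cycle of G(n,k) is identified with its (nonempty) edge set T:
   T is a cycle iff its edges can be arranged as such a cyclic sequence.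
   (Such sequences have length <= k, whence the bounded quantification.) *)
Definition is_dcycle (n : int) (k : nat) (T : {set 'I_k}) : bool :=
  [exists m : 'I_k.+1, exists t : m.-tuple 'I_k,
     @cycle_seq n k (val t) && (T == [set x in val t])].

Definition num_cycles (n : int) (k : nat) : nat :=
  #|[set T : {set 'I_k} | @is_dcycle n k T]|.

(* Main.v *)
Require Import Defs.
From mathcomp Require Import all_boot all_order all_algebra all_field zify.
Local Open Scope ring_scope.
Import GRing.Theory Num.Theory.
Set Implicit Arguments. Unset Strict Implicit. Unset Printing Implicit Defensive.
Lemma resid_inj (n : int) (m i j : nat) : (0 < m)%N -> (i < m)%N -> (j < m)%N -> resid (n + i%:Z) m = resid (n + j%:Z) m -> i = j.
Proof. rewrite /resid => hm hi hj h.
have h1 : ((n + i%:Z) %% m%:Z = (n + j%:Z) %% m%:Z)%Z.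
  have hm0 : m%:Z != 0 by lia.
  have := modz_ge0 (n + i%:Z) hm0; have := modz_ge0 (n + j%:Z) hm0. lia.
move/eqP: h1; rewrite eqz_modDl !modz_small; [by move/eqP => [] | lia..].
Qed.
Lemma resid_lt l m : (0 < m)%N -> (resid l m < m)%N.
Proof. rewrite /resid=> hm. lia. Qed.
Lemma residD l m : resid (l + m%:Z) m = resid l m.
Proof. by rewrite /resid modzDr. Qed.
Lemma etail_inj n k : injective (@etail n k).
Proof.
move=> i j; rewrite /etail.
have E (l : 'I_k) : (l.+1%:Z + n - 2 = (n - 1) + l%:Z). lia.
rewrite !E => H; apply/val_inj; have := ltn_ord i; have := ltn_ord j => hj hi; apply: (@resid_inj _ _ _ _ _ _ _ H); lia.
Qed.
Lemma ehead_inj n k : injective (@ehead n k).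
Proof.
move=> i j; rewrite /ehead.
have E (l : 'I_k) : (l.+1%:Z + n - 1 = n + l%:Z). lia.
rewrite !E => H; apply/val_inj; have := ltn_ord i; have := ltn_ord j => hj hi; apply: (@resid_inj _ _ _ _ _ _ _ H); lia.
Qed.
Lemma etail_lt n k i : (@etail n k i < k.+1)%N.
Proof. exact: resid_lt. Qed.
Lemma ehead_lt n k i : (@ehead n k i < k)%N.
Proof. apply: resid_lt; case: i; lia. Qed.
Lemma HmxE n k xi i j : Hmx n k xi i j = xi ^+ (j.+1 * etail n i) - xi ^+ (j.+1 * ehead n i).
Proof.
rewrite /Hmx mxE /vvec /etail /ehead.
have -> : n + k%:Z + i%:Z = (i.+1%:Z + n - 2) + (k.+1)%:Z by lia.
rewrite residD.
have -> : (i.+1%:Z + n - 2) + (k.+1)%:Z = (i.+1%:Z + n - 1) + k%:Z by lia.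
by rewrite residD.
Qed.
Lemma geo k (xi : algC) d : (k.+1).-primitive_root xi ->
  \sum_(c < k.+1) (xi ^+ d) ^+ c = if (k.+1 %| d)%N then k.+1%:R else 0.
Proof.
move=> pr; rewrite (prim_order_dvd pr); case: eqP => [->|ne].
  by rewrite (eq_bigr (fun _ => 1)) ?sumr_const ?card_ord // => c _; rewrite expr1n.
have: (xi ^+ d) ^+ k.+1 - 1 = 0 by rewrite -exprM mulnC exprM (prim_expr_order pr) expr1n subrr.
by rewrite subrX1 => /eqP; rewrite mulf_eq0 subr_eq0 (negbTE (introN eqP ne)) /= => /eqP.
Qed.
Lemma dvd_range k a b : (a < k.+1)%N -> (b < k.+1)%N -> (k.+1 %| a + (k.+1 - b))%N = (a == b).
Proof.
move=> ha hb; case: eqP => [->|ne]; first by rewrite subnKC ?dvdnn // ltnW.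
apply/negP => /dvdnP [q hq]; move: hq; case: q => [|[|q]] /=; lia.
Qed.
Lemma dft k (xi : algC) (W : nat -> algC) : (k.+1).-primitive_root xi ->
  (forall c, (c < k.+1)%N -> \sum_(a < k.+1) W a * xi ^+ (c * a) = 0) ->
  forall b, (b < k.+1)%N -> W b = 0.
Proof.
move=> pr hc b hb.
have : \sum_(c < k.+1) xi ^+ (c * (k.+1 - b)) * \sum_(a < k.+1) W a * xi ^+ (c * a) = 0.
  by rewrite big1 // => c _; rewrite hc ?mulr0.
under eq_bigr => c _ do rewrite mulr_sumr.
rewrite exchange_big /=.
under eq_bigr => a _.
  under eq_bigr => c _ do rewrite mulrCA -exprD -mulnDr mulnC exprM.
  rewrite -mulr_sumr geo // addnC dvd_range //.
  over.
rewrite /= (bigD1 (Ordinal hb)) //= eqxx big1 ?addr0.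
  by move/eqP; rewrite mulf_eq0 pnatr_eq0 orbF => /eqP.
by move=> a /negbTE; rewrite -val_eqE /= => ->; rewrite mulr0.
Qed.
Definition wv n k (y : 'I_k -> algC) (a : nat) : algC :=
  \sum_(i | etail n i == a) y i - \sum_(i | ehead n i == a) y i.
Lemma sum_by_val k (g : 'I_k -> nat) M (hg : forall i, (g i < M)%N) (F : 'I_k -> algC) (G : nat -> algC) :
 \sum_i F i * G (g i) = \sum_(a < M) (\sum_(i | g i == a) F i) * G a.
Proof.
under [RHS]eq_bigr => a _ do rewrite mulr_suml big_mkcond /=.
rewrite exchange_big /=; apply: eq_bigr => i _.
rewrite (bigD1 (Ordinal (hg i))) //= eqxx big1 ?addr0 //.
by move=> a /negbTE; rewrite -val_eqE /= eq_sym => ->.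
Qed.
Lemma Esum n k (xi : algC) (y : 'I_k -> algC) c :
  \sum_i y i * (xi ^+ (c * etail n i) - xi ^+ (c * ehead n i)) = \sum_(a < k.+1) wv n y a * xi ^+ (c * a).
Proof.
under eq_bigr => i _ do rewrite mulrBr.
rewrite sumrB (sum_by_val (g := @etail n k) (M := k.+1) _ _ (fun a => xi ^+ (c * a))); last exact: etail_lt.
rewrite (sum_by_val (g := @ehead n k) (M := k.+1) _ _ (fun a => xi ^+ (c * a))); last by move=> i; apply: ltnW; apply: ehead_lt.
by rewrite -sumrB; apply: eq_bigr => a _; rewrite /wv mulrBl.
Qed.
Lemma ker_w n k (xi : algC) (u : 'rV_k) : (k.+1).-primitive_root xi -> u *m Hmx n k xi = 0 ->
  forall a, wv n (fun i => u 0 i) a = 0.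
Proof.
move=> pr hu a; case: (ltnP a k.+1) => ha; last first.
  rewrite /wv !big_pred0 ?subrr // => i; apply/negbTE; apply/eqP => E;
    have := @ehead_lt n k i; have := @etail_lt n k i; lia.
apply: (dft (W := wv n (fun i => u 0 i)) pr) => // c hc.
rewrite -Esum; case: c hc => [|c] hc.
  by rewrite big1 // => i _; rewrite !mul0n subrr mulr0.
have hc' : (c < k)%N by [].
have E : \sum_j u 0 j * Hmx n k xi j (Ordinal hc') = 0.
  by have := congr1 (fun M : 'rV_k => M 0 (Ordinal hc')) hu; rewrite !mxE.
by rewrite -[RHS]E; apply: eq_bigr => i _; rewrite HmxE.
Qed.
Lemma w_ker n k (xi : algC) (u : 'rV_k) : (forall a, wv n (fun i => u 0 i) a = 0) -> u *m Hmx n k xi = 0.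
Proof.
move=> hw; apply/rowP => j; rewrite !mxE.
under eq_bigr => i _ do rewrite HmxE.
by rewrite Esum big1 // => a _; rewrite hw mul0r.
Qed.
Lemma sum_inj1 k (g : 'I_k -> nat) (inj : injective g) (F : 'I_k -> algC) i0 a :
  g i0 = a -> \sum_(i | g i == a) F i = F i0.
Proof. by move=> <-; rewrite (big_pred1 i0) // => i /=; rewrite (inj_eq inj). Qed.
Lemma step n k (y : 'I_k -> algC) x b : (forall a, wv n y a = 0) -> ehead n x = etail n b -> y x = y b.
Proof.
move=> hw E; have := hw (ehead n x); rewrite /wv (sum_inj1 (@etail_inj n k) _ (esym E)).
by rewrite (sum_inj1 (@ehead_inj n k) _ (erefl _)) => /eqP; rewrite subr_eq0 => /eqP.
Qed.
Lemma dcycleP n k (T : {set 'I_k}) : is_dcycle n T -> exists s, cycle_seq n s /\ T = [set x in s].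
Proof. by case/existsP => m /existsP [t /andP [cs /eqP ->]]; exists (val t). Qed.
Lemma path_inv (T : eqType) (r : rel T) (P : T -> Prop) x p :
  (forall x b, r x b -> P x -> P b) -> path r x p -> P x -> forall b, b \in p -> P b.
Proof.
move=> hs; elim: p x => //= z p IH x /andP [rxz pz] Px b; rewrite in_cons => /orP [/eqP ->|bp].
  exact: hs rxz Px.
by apply: (IH z pz _ b bp); exact: hs rxz Px.
Qed.
Lemma cyc_inv (T : eqType) (r : rel T) (P : T -> Prop) s a :
  (forall x b, r x b -> P x -> P b) -> cycle r s -> a \in s -> P a -> forall b, b \in s -> P b.
Proof.
move=> hs cs as_ Pa b bs; case: (rot_to as_) => i s' E.
have : cycle r (a :: s') by rewrite -E rot_cycle.
rewrite /= => pth; move: bs; rewrite -(mem_rot i) E in_cons => /orP [/eqP -> //| bs'].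
by apply: (path_inv hs pth Pa); rewrite mem_rcons in_cons bs' orbT.
Qed.
Lemma closedT n k (s : seq 'I_k) a b : cycle_seq n s -> a \in s -> ehead n a = etail n b -> b \in s.
Proof.
case/and4P => _ _ _ cyc as_ E; have := next_cycle cyc as_; move/eqP; rewrite E.
by move/etail_inj => ->; rewrite mem_next.
Qed.
Lemma dcyc_disj n k (T1 T2 : {set 'I_k}) e : is_dcycle n T1 -> is_dcycle n T2 -> e \in T1 -> e \in T2 -> T1 = T2.
Proof.
have sub (s1 s2 : seq 'I_k) : cycle_seq n s1 -> cycle_seq n s2 -> e \in s1 -> e \in s2 -> {subset s1 <= s2}.
  move=> c1 c2 e1 e2 x; have := c1; case/and4P => _ _ _ cyc.
  apply: (cyc_inv (P := fun x => x \in s2) _ cyc e1 e2) => x0 b /eqP E x0s.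
  exact: closedT c2 x0s E.
case/dcycleP => s1 [c1 ->]; case/dcycleP => s2 [c2 ->]; rewrite !inE => e1 e2.
by apply/setP => x; rewrite !inE; apply/idP/idP; apply: sub.
Qed.
Lemma dcyc_const n k (T : {set 'I_k}) (y : 'I_k -> algC) a b : is_dcycle n T -> (forall c, wv n y c = 0) ->
  a \in T -> b \in T -> y a = y b.
Proof.
case/dcycleP => s [cs ->] hw; rewrite !inE => as_ bs; have := cs; case/and4P => _ _ _ cyc.
apply: (cyc_inv (P := fun x => y a = y x) _ cyc as_ _ bs) => // x c /eqP E ->.
exact: step hw E.
Qed.
Lemma sum_ind k (g : 'I_k -> nat) (inj : injective g) (P : pred 'I_k) a :
  \sum_(i | g i == a) ((P i)%:R : algC) = ([exists i, P i && (g i == a)])%:R.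
Proof.
case: (pickP (fun i => g i == a)) => [i0 /eqP h | none].
  rewrite (sum_inj1 inj _ h).
  suff -> : [exists i, P i && (g i == a)] = P i0 by [].
  apply/existsP/idP => [[i /andP [Pi /eqP gi]] | Pi0].
    by have <- : i = i0 by apply: inj; rewrite gi h.
  by exists i0; rewrite Pi0 h eqxx.
rewrite big_pred0 //; case: existsP => // [[i /andP [_ gi]]].
by rewrite none in gi.
Qed.
Lemma wind n k (T : {set 'I_k}) : is_dcycle n T -> forall a, wv n (fun i => ((i \in T)%:R : algC)) a = 0.
Proof.
move=> dT a; rewrite /wv (sum_ind (@etail_inj n k) (mem T)) (sum_ind (@ehead_inj n k) (mem T)).
case/dcycleP: dT => s [cs ->]; have := cs; case/and4P => _ _ _ cyc.
suff -> : [exists i, (i \in [set x in s]) && (etail n i == a)] = [exists i, (i \in [set x in s]) && (ehead n i == a)].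
  by rewrite subrr.
apply/existsP/existsP => [[i /andP [ins /eqP E]] | [i /andP [ins /eqP E]]].
  move: ins; rewrite inE => ins; exists (prev s i); rewrite inE mem_prev ins /=.
  by have := prev_cycle cyc ins => /eqP ->; rewrite E.
move: ins; rewrite inE => ins; exists (next s i); rewrite inE mem_next ins /=.
by have := next_cycle cyc ins => /eqP <-; rewrite E.
Qed.
Lemma exists_cycle n k (y : 'I_k -> algC) e : (forall a, wv n y a = 0) -> y e != 0 ->
  exists T, is_dcycle n T && (e \in T).
Proof.
move=> hw ye.
pose succ (i : 'I_k) : 'I_k := if [pick j | etail n j == ehead n i] is Some j then j else i.
have A i : y i != 0 -> ehead n i = etail n (succ i).
  move=> yi; rewrite /succ; case: pickP => [j /eqP -> // | none].
  have := hw (ehead n i); rewrite /wv big_pred0 // (sum_inj1 (@ehead_inj n k) _ (erefl _)).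
  by move/eqP; rewrite sub0r oppr_eq0 (negbTE yi).
have B i : y i != 0 -> y (succ i) = y i by move=> yi; rewrite (step hw (A i yi)).
pose S := [pred i | y i != 0].
have f_in : {homo succ : x / x \in S} by move=> x; rewrite !inE => yx; rewrite B.
have injf : {in S &, injective succ}.
  move=> x1 x2; rewrite !inE => y1 y2 E; apply: (@ehead_inj n k).
  by rewrite (A _ y1) (A _ y2) E.
have eS : e \in S by rewrite inE.
set s := orbit succ e.
have fc : fcycle succ s := cycle_orbit_in f_in injf eS.
have allS : all (mem S) s.
  apply/allP => x /trajectP [i _ ->]; exact: iter_in.
have cs : cycle (fun a b => ehead n a == etail n b) s.
  rewrite -(eq_in_cycle (P := mem S) (e := frel succ)) // => x1 x2 h1 _ /=.
  rewrite inE in h1; rewrite (A _ h1); apply/eqP/eqP => [-> //|].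
  by move/etail_inj.
have Us : uniq s := orbit_uniq succ e.
have es : e \in s := in_orbit succ e.
have hsz : (size s < k.+1)%N.
  by move/card_uniqP: Us => <-; rewrite ltnS -[X in (_ <= X)%N](card_ord k) max_card.
exists [set x in s]; rewrite inE es andbT.
apply/existsP; exists (Ordinal hsz); apply/existsP; exists (in_tuple s).
rewrite /cycle_seq /= cs Us (map_inj_uniq (@etail_inj n k)) Us !andbT eqxx andbT.
by apply/eqP => s0; rewrite s0 in es.
Qed.
Lemma wv_ext n k (y1 y2 : 'I_k -> algC) a : y1 =1 y2 -> wv n y1 a = wv n y2 a.
Proof. by move=> E; rewrite /wv; congr (_ - _); apply: eq_bigr. Qed.

Theorem theorem2p1 (k : nat) (n : int) (xi : algC) :
  (1 <= k)%N -> (k.+1).-primitive_root xi ->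
  nullity (Hmx n k xi) = num_cycles n k.
Proof.
move=> hk pr; rewrite /nullity /num_cycles -mxrank_ker.
set C := [set T : {set 'I_k} | is_dcycle n T].
set H := Hmx n k xi.
pose i0 : 'I_k := Ordinal hk.
pose rep (T : {set 'I_k}) := odflt i0 [pick x in T].
have rep_in T : is_dcycle n T -> rep T \in T.
  case/dcycleP => s [cs ->]; rewrite /rep; case: pickP => [x //| none].
  case/and4P: cs; case: s none => // x s none _ _ _ _.
  by have := none x; rewrite !inE eqxx.
have CE (r : 'I_#|C|) : is_dcycle n (enum_val r : {set 'I_k}) by have := enum_valP r; rewrite inE.
pose B : 'M[algC]_(#|C|, k) := \matrix_(r, j) ((j \in (enum_val r : {set 'I_k}))%:R).
pose B' : 'M[algC]_(k, #|C|) := \matrix_(j, r) ((j == rep (enum_val r))%:R).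
have freeB : row_free B.
  apply/row_freeP; exists B'; apply/matrixP => r r'; rewrite !mxE.
  rewrite (bigD1 (rep (enum_val r'))) //= big1 ?addr0.
    rewrite !mxE eqxx mulr1.
    suff -> : (rep (enum_val r') \in enum_val r) = (r == r') by [].
    apply/idP/eqP => [h | <-]; last exact: rep_in.
    apply: enum_val_inj; apply: (dcyc_disj (CE r) (CE r') h); exact: rep_in.
  by move=> j /negbTE hj; rewrite !mxE hj mulr0.
have rB : \rank B = #|C| by apply/eqP.
have BH : (B <= kermx H)%MS.
  rewrite sub_kermx; apply/eqP/row_matrixP => r; rewrite row_mul row0.
  apply: w_ker => a; rewrite -(wind (CE r) a); apply: wv_ext => i; rewrite !mxE.
  done.
have HB : (kermx H <= B)%MS.
  apply/row_subP => i; set u := row i (kermx H).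
  have uH : u *m H = 0 by rewrite -row_mul mulmx_ker row0.
  have hw := ker_w pr uH.
  apply/submxP; exists (\row_r u 0 (rep (enum_val r))); apply/rowP => j; rewrite [RHS]mxE.
  have -> : \sum_r (\row_r u 0 (rep (enum_val r))) 0 r * B r j =
            \sum_(T in C) u 0 (rep T) * (j \in T)%:R.
    by rewrite [RHS]big_enum_val; apply: eq_bigr => r _; rewrite !mxE.
  case: (eqVneq (u 0 j) 0) => [u0 | un0].
    rewrite u0 big1 // => T; rewrite inE => dT.
    case jT: (j \in T); last by rewrite mulr0.
    by rewrite (dcyc_const (y := fun i => u 0 i) dT hw (rep_in _ dT) jT) u0 mul0r.
  case: (exists_cycle hw un0) => T0 /andP [dT0 jT0]; have T0C : T0 \in C by rewrite inE.
  rewrite (bigD1 T0) //= jT0 mulr1 big1 ?addr0.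
    exact: (dcyc_const (y := fun i => u 0 i) dT0 hw jT0 (rep_in _ dT0)).
  move=> T /andP [TC ne]; case jT: (j \in T); last by rewrite mulr0.
  by move: TC; rewrite inE => dT; rewrite (dcyc_disj dT dT0 jT jT0) eqxx in ne.
by rewrite -rB; apply/eqP; rewrite eqn_leq !mxrankS.
Qed.
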